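(* Let $\lambda:V^X\to\mathbb{N}\cup\{+\infty\}$ be a labeling function, $v\in V^X$, and let $\rho=\rho_0\rho_1\dots$ be a $\lambda$-consistent play in $\mathrm{Plays}_X(v)$. Then there exists an infinite path $\pi=\pi_0\pi_1\dots$ in $\mathbb{C}(\lambda)$ such that $\pi_0=v^C$ and, for every $n\in\mathbb{N}$, $\pi_n$ is of the form $(\rho_n,(c'_i)_{i\in\Pi})$ (i.e., $\rho$ is the projection of $\pi$ on $V^X$).
   Context: Let $\mathcal{G}$ be a quantitative reachability game on an arena $G=(\Pi,V,(V_i)_{i\in\Pi},E)$ (finite player set $\Pi$, finite vertex set $V$, partition $(V_i)$, every vertex has a successor) with targets $F_i\subseteq V$. Its extended arena $X$ has vertices $V^X=V\times2^\Pi$, edges $((v,I),(v',I'))\in E^X$ iff $(v,v')\in E$ and $I'=I\cup\{i:v'\in F_i\}$, $(v,I)\in V^X_i$ iff $v\in V_i$; for $u\in V^X$, $I(u)$ is its second component. For a play $\rho$ of $X$, $\mathrm{Cost}_i(\rho)$ is the least $k$ with $i\in I(\rho_k)$, or $+\infty$; $\mathrm{Plays}_X(v)$ is the set of plays of $X$ starting at $v$. A play $\rho$ of $X$ is $\lambda$-consistent if $\mathrm{Cost}_i(\rho_{\ge n})\le\lambda(\rho_n)$ for all $n$ and all $i$ with $\rho_n\in V^X_i$, where $\rho_{\ge n}=\rho_n\rho_{n+1}\dots$. Counter graph $\mathbb{C}(\lambda)$: let $K$ be the maximum of the finite values of $\lambda$ ($0$ if none) and $\mathcal{K}=\{0,\dots,K\}\cup\{+\infty\}$;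 vertices are $V^X\times\mathcal{K}^\Pi$, and there is an edge from $(u,(c_i)_i)$ to $(u',(c'_i)_i)$ iff $(u,u')\in E^X$ and for every $i\in\Pi$: either $i\in I(u')$ and $c'_i=0$; or $i\notin I(u')$, $u'\notin V^X_i$, $c_i>1$ and $c'_i=c_i-1$; or $i\notin I(u')$, $u'\in V^X_i$, $c_i>1$ and $c'_i=\min(c_i-1,\lambda(u'))$ (with $+\infty-1=+\infty$). The starting vertex of $u\in V^X$ is $u^C=(u,(c_i)_i)$ with $c_i=0$ if $i\in I(u)$, $c_i=\lambda(u)$ if $i\notin I(u)$ and $u\in V^X_i$, and $c_i=+\infty$ otherwise. *)

(* Defs.v *)
From Stdlib Require Import ClassicalEpsilon.
From mathcomp Require Import all_boot.
Set Implicit Arguments. Unset Strict Implicit. Unset Printing Implicit Defensive.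

(* Extended naturals N ∪ {+oo}: [Some n] = n, [None] = +oo. *)
Definition enat := option nat.

Definition ele (a b : enat) : Prop :=
  match b with
  | None => True
  | Some m => match a with None => False | Some k => k <= m end
  end.

Definition egt1 (c : enat) : bool := if c is Some n then 1 < n else true.
Definition epred (c : enat) : enat := if c is Some n then Some n.-1 else None.
Definition emin (a b : enat) : enat :=
  match a, b with
  | None, _ => b
  | _, None => a
  | Some x, Some y => Some (minn x y)
  end.

Section Game.
(* Players Pi, vertices V, partition given by owner (v ∈ V_i iff owner v = i),
   edge relation E, targets F i. *)
Variables (Pi V : finType) (owner : V -> Pi) (E : rel V) (F : Pi -> {set V}).

Definition XV := (V * {set Pi})%type.
Definition Iof (u : XV) : {set Pi} := u.2.
Definition XownedBy (u : XV) (i : Pi) : bool := owner u.1 == i.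
Definition Xedge (u u' : XV) : bool :=
  E u.1 u'.1 && (u'.2 == u.2 :|: [set i | u'.1 \in F i]).

Definition Xplay (rho : nat -> XV) : Prop := forall n, Xedge (rho n) (rho n.+1).
Definition XplayFrom (v : XV) (rho : nat -> XV) : Prop := Xplay rho /\ rho 0 = v.

Definition suffix (rho : nat -> XV) (n : nat) : nat -> XV := fun k => rho (n + k).

Definition Cost (i : Pi) (rho : nat -> XV) : enat :=
  match excluded_middle_informative (exists k, (fun k => i \in Iof (rho k)) k) with
  | left H => Some (ex_minn H)
  | right _ => None
  end.

Definition consistent (lam : XV -> enat) (rho : nat -> XV) : Prop :=
  forall n i, XownedBy (rho n) i -> ele (Cost i (suffix rho n)) (lam (rho n)).

Definition Kmax (lam : XV -> enat) : nat := \max_(u : XV) odflt 0 (lam u).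

Definition CV := (XV * (Pi -> enat))%type.

Definition inCV (lam : XV -> enat) (x : CV) : Prop :=
  forall i, match x.2 i with Some k => is_true (k <= Kmax lam) | None => True end.

Definition Cedge (lam : XV -> enat) (x y : CV) : Prop :=
  Xedge x.1 y.1 /\
  forall i,
    (i \in Iof y.1 /\ y.2 i = Some 0) \/
    (i \notin Iof y.1 /\ ~~ XownedBy y.1 i /\ egt1 (x.2 i) /\ y.2 i = epred (x.2 i)) \/
    (i \notin Iof y.1 /\ XownedBy y.1 i /\ egt1 (x.2 i) /\
       y.2 i = emin (epred (x.2 i)) (lam y.1)).

Definition startC (lam : XV -> enat) (u : XV) : CV :=
  (u, fun i => if i \in Iof u then Some 0
               else if XownedBy u i then lam u else None).

End Game.

(* Main.v *)
Require Import Defs.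
From Stdlib Require Import ClassicalEpsilon.
From mathcomp Require Import all_boot.

Theorem lemma3p5 (Pi V : finType) (owner : V -> Pi) (E : rel V)
  (F : Pi -> {set V})
  (Hsucc : forall v : V, exists v' : V, E v v')
  (lam : XV Pi V -> enat) (v : XV Pi V) (rho : nat -> XV Pi V) :
  XplayFrom E F v rho ->
  consistent owner lam rho ->
  exists pi : nat -> CV Pi V,
    pi 0 = startC owner lam v /\
    (forall n, inCV lam (pi n)) /\
    (forall n, Cedge owner E F lam (pi n) (pi n.+1)) /\
    (forall n, (pi n).1 = rho n).
Proof.
move=> [Hp Hv0] Hc.
pose good n i (c : enat) :=
  forall k, c = Some k -> exists2 j, j <= k & i \in Iof (rho (n + j)).
have mono : forall n i, i \in Iof (rho n) -> i \in Iof (rho n.+1).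
  move=> n i Hi; rewrite /Iof; move: (Hp n) => /andP [_ /eqP ->].
  by rewrite in_setU Hi.
have costP : forall n i l, XownedBy owner (rho n) i -> lam (rho n) = Some l ->
    exists2 j, j <= l & i \in Iof (rho (n + j)).
  move=> n i l Ho Hl; have := Hc n i Ho; rewrite Hl /Cost.
  case: excluded_middle_informative => // H /= Hle.
  exists (ex_minn H) => //.
  by case: ex_minnP => m Hm _.
have step : forall n i c, good n i c -> i \notin Iof (rho n.+1) ->
    egt1 c /\ good n.+1 i (epred c).
  move=> n i [k|] //= G Hni.
  have [j jk Hj] := G k erefl.
  have j2 : 1 < j.
    move: jk Hj; case: j => [|[|j]] //= _.
    - by rewrite addn0 => /mono; rewrite (negbTE Hni).
    - by rewrite addn1 (negbTE Hni).
  split; first exact: leq_trans j2 jk.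
  move=> k' [<-]; exists j.-1.
    by rewrite -!subn1 leq_sub2r.
  by rewrite addSn -addnS prednK // ltnW.
have gmin : forall n i a b, good n i a -> good n i b -> good n i (emin a b).
  move=> n i [a|] [b|] //= Ga Gb k [<-].
  rewrite /minn; case: ifP => _; [exact: Ga | exact: Gb].
pose fix cnt n : Pi -> enat :=
  match n with
  | 0 => (startC owner lam v).2
  | n'.+1 => fun i => if i \in Iof (rho n) then Some 0
             else if XownedBy owner (rho n) i then emin (epred (cnt n' i)) (lam (rho n))
             else epred (cnt n' i)
  end.
have inv : forall n i, good n i (cnt n i).
  elim=> [|n IH] i /=.
    rewrite -Hv0; case: ifP => Hi.
      by move=> k [<-]; exists 0 => //; rewrite addn0.
    case: ifP => Ho //.
    by move=> k Hk; apply: (costP 0 i k Ho Hk).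
  case: ifP => Hi.
    by move=> k [<-]; exists 0 => //; rewrite addn0.
  have [_ G'] := step n i _ (IH i) (negbT Hi).
  case: ifP => Ho //.
  apply: gmin => // k Hk; exact: (costP n.+1 i k Ho Hk).
have lamb : forall u l, lam u = Some l -> l <= Kmax lam.
  move=> u l Hl; rewrite /Kmax.
  by have := @leq_bigmax _ (fun u => odflt 0 (lam u)) u; rewrite Hl.
pose bnd (c : enat) := match c with Some k => is_true (k <= Kmax lam) | None => True end.
have bpred : forall c, bnd c -> bnd (epred c).
  by move=> [k|] //= H; apply: leq_trans H; apply: leq_pred.
have bmin : forall a b, bnd a -> bnd b -> bnd (emin a b).
  move=> [a|] [b|] //= Ha Hb; rewrite /minn; case: ifP => _ //.
have blam : forall u, bnd (lam u).
  move=> u; case H: (lam u) => [l|] //=; exact: lamb H.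
have bounded : forall n i, bnd (cnt n i).
  elim=> [|n IH] i /=.
    case: ifP => _ //; case: ifP => _ //.
  case: ifP => _ //; case: ifP => _; [apply: bmin => //; apply: bpred | apply: bpred]; exact: IH.
exists (fun n => (rho n, cnt n)).
split; first by rewrite Hv0.
split; first by move=> n i /=; exact: bounded.
split; last by [].
move=> n; split; first exact: Hp.
move=> i /=.
case: ifP => Hi; first by left.
have [Heg _] := step n i _ (inv n i) (negbT Hi).
case: ifP => Ho; right; [right|left]; repeat split => //.
Qed.
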